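(* Let $\sigma$ be a signature and $k$ a natural number; let $\chi_0:=\bot$ and $\chi_k:=\chi\vee\dots\vee\chi$ ($k$ disjuncts) for $k\ge1$. (i) For any generalized causal team $T$ over $\sigma$: $T\models^g\chi_k$ iff $|T/_{\approx}|\leq k$. (ii) For any causal team $T$ over $\sigma$: $T\models^c\chi_k$ iff $|T^-|\leq k$.
   Context: A signature $\sigma=(\mathrm{Dom},\mathrm{Ran})$: $\mathrm{Dom}$ nonempty finite set of variables, each with nonempty finite range $\mathrm{Ran}(X)$; $\mathbf X=\mathbf x$ abbreviates $X_1=x_1\wedge\dots\wedge X_n=x_n$ ($\mathbf x\in\prod\mathrm{Ran}(X_i)$), inconsistent if it contains $X=x,X=x'$ with $x\ne x'$. ${=}(V)$ is the constancy atom; $\bot$ abbreviates $X=x\wedge\neg(X=x)$. With $\mathbf W_V$ listing $\mathrm{Dom}\setminus\{V\}$, $\chi:=\bigwedge_{V\in\mathrm{Dom}}\bigwedge_{\mathbf w\in\mathrm{Ran}(\mathbf W_V)}\big(\mathbf W_V=\mathbf w\;\Box\!\!\rightarrow{=}(V)\big)\wedge\bigwedge_{V\in\mathrm{Dom}}{=}(V)$. Systems of functions $\mathcal F$: for each $V\in\mathrm{En}(\mathcal F)\subseteq\mathrm{Dom}$ parents $PA^{\mathcal F}_V\subseteq\mathrm{Dom}\setminus\{V\}$ and $\mathcal F_V:\mathrm{Ran}(PA^{\mathcal F}_V)\to\mathrm{Ran}(V)$; $\mathrm{Ex}(\mathcal F)=\mathrm{Dom}\setminus\mathrm{En}(\mathcal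 F)$; only recursive (acyclic parent graph). An assignment $s$ is compatible with $\mathcal F$ if $s(V)=\mathcal F_V(s(PA^{\mathcal F}_V))$ for $V\in\mathrm{En}(\mathcal F)$. For consistent $\mathbf X=\mathbf x$: $\mathcal F_{\mathbf X=\mathbf x}$ restricts $\mathcal F$ to $\mathrm{En}(\mathcal F)\setminus\mathbf X$; $s^{\mathcal F}_{\mathbf X=\mathbf x}$: $X_i\mapsto x_i$, $V\mapsto s(V)$ on $\mathrm{Ex}(\mathcal F)\setminus\mathbf X$, $V\mapsto\mathcal F_V(s^{\mathcal F}_{\mathbf X=\mathbf x}(PA^{\mathcal F}_V))$ on $\mathrm{En}(\mathcal F)\setminus\mathbf X$. Causal team $T=(T^-,\mathcal F)$ ($T^-$ a set of compatible assignments; empty team components identified as $\emptyset$); causal subteams $(S^-,\mathcal F)$, $S^-\subseteq T^-$; $T_{\mathbf X=\mathbf x}=(\{s^{\mathcal F}_{\mathbf X=\mathbf x}:s\in T^-\},\mathcal F_{\mathbf X=\mathbf x})$; $\models^c$: $T\models X=x$ iff $s(X)=x$ for all $s\in T^-$; $T\models{=}(V)$ iff $s(V)=s'(V)$ for all $s,s'\in T^-$; $T\models\neg\alpha$ iff $(\{s\},\mathcal F)\not\models\alpha$ for all $s\in T^-$; $\wedge$ classical; $T\models\varphi\vee\psi$ iff causal subteams $T_1,T_2$ exist with $T_1^-\cup T_2^-=T^-$, $T_1\models\varphi$, $T_2\models\psi$; $T\models\mathbf X=\mathbf x\;\Box\!\!\rightarrow\varphi$ iff $\mathbf X=\mathbf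 x$ inconsistent or $T_{\mathbf X=\mathbf x}\models\varphi$. Generalized causal team: a set $T$ of compatible pairs $(s,\mathcal F)$; $T^-=\{s:(s,\mathcal F)\in T\}$; $T_{\mathbf X=\mathbf x}=\{(s^{\mathcal F}_{\mathbf X=\mathbf x},\mathcal F_{\mathbf X=\mathbf x}):(s,\mathcal F)\in T\}$; $\models^g$: same clauses except $T\models\neg\alpha$ iff $\{(s,\mathcal F)\}\not\models\alpha$ for all $(s,\mathcal F)\in T$, and $T\models\varphi\vee\psi$ iff $T=T_1\cup T_2$ with $T_1\models\varphi$, $T_2\models\psi$. $\mathrm{Cn}(\mathcal F)=\{V\in\mathrm{En}(\mathcal F):\mathcal F_V\text{ constant}\}$; $\mathcal F_V\sim\mathcal G_V$ iff $\mathcal F_V(\mathbf x\mathbf y)=\mathcal G_V(\mathbf x\mathbf z)$ for all $\mathbf x\in\mathrm{Ran}(PA^{\mathcal F}_V\cap PA^{\mathcal G}_V)$, $\mathbf y\in\mathrm{Ran}(PA^{\mathcal F}_V\setminus PA^{\mathcal G}_V)$, $\mathbf z\in\mathrm{Ran}(PA^{\mathcal G}_V\setminus PA^{\mathcal F}_V)$; $\mathcal F\sim\mathcal G$ iff $\mathrm{En}(\mathcal F)\setminus\mathrm{Cn}(\mathcal F)=\mathrm{En}(\mathcal G)\setminus\mathrm{Cn}(\mathcal G)$ and $\mathcal F_V\sim\mathcal G_V$ for each such $V$. On pairs, $(s,\mathcal F)\approx(t,\mathcal G)$ iff $s=t$ and $\mathcal F\sim\mathcal G$; $T/_{\approx}$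 is the set of $\approx$-classes of elements of $T$. *)

(* Defs.v *)
From HB Require Import structures.
From mathcomp Require Import ssreflect ssrfun ssrbool eqtype ssrnat seq choice fintype finfun finset fingraph.
Set Implicit Arguments.
Unset Strict Implicit.
Unset Printing Implicit Defensive.

Section CausalTeams.

(* Signature sigma = (Dom, Ran): Dom is the finite type V of variables,
   Ran v the finite range of v (nonemptiness is a hypothesis of the theorem). *)
Variable V : finType.
Variable Ran : V -> finType.

Definition Asg := {dffun forall v : V, Ran v}.

(* Raw system of functions: parents PA and, for each variable, either
   None (exogenous) or Some f (endogenous with structural function f).
   f is stored as a function of the whole assignment; validity below requires
   it to depend only on the parents, so it is exactly a map Ran(PA_v) -> Ran(v). *)
Definition Sys := ({ffun V -> {set V}} * {dffun forall v : V, option {ffun Asg -> Ran v}})%type.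

Definition PA (F : Sys) (v : V) : {set V} := F.1 v.
Definition Fn (F : Sys) (v : V) : option {ffun Asg -> Ran v} := F.2 v.
Definition En (F : Sys) : {set V} := [set v | Fn F v != None].

Definition pedge (F : Sys) : rel V := fun x y => (y \in En F) && (x \in PA F y).

Definition valid_sys (F : Sys) : Prop :=
  [/\ (forall v, v \notin PA F v),
      (forall v, Fn F v = None -> PA F v = set0),
      (forall v f, Fn F v = Some f ->
          forall s t : Asg, (forall w, w \in PA F v -> s w = t w) -> f s = f t)
    &
      (forall x y, pedge F x y -> ~~ connect (pedge F) y x)].

Definition compatible (F : Sys) (s : Asg) : Prop :=
  forall v, match Fn F v with Some f => s v = f s | None => True end.

(* Interventions  X1 = x1 /\ ... /\ Xn = xn  as lists of (variable, value). *)
Definition intv := seq {x : V & Ran x}.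

Definition consistent (I : intv) : Prop :=
  forall i j, i \in I -> j \in I -> tag i = tag j -> i = j.

Definition ivars (I : intv) : {set V} := [set v | has (fun i => tag i == v) I].

Definition setv (I : intv) (s : Asg) : Asg :=
  finfun (fun v : V => foldr (fun i acc => if tag i == v
                                   then tagged_as (Tagged Ran (s v)) i else acc)
                             (s v) I).

Definition sys_int (F : Sys) (I : intv) : Sys :=
  ([ffun v => if v \in ivars I then set0 else PA F v],
   finfun (fun v : V => if v \in ivars I then None else Fn F v)
     : {dffun forall v : V, option {ffun Asg -> Ran v}}).

Definition step (F : Sys) (t : Asg) : Asg :=
  finfun (fun v : V => match Fn F v with Some f => f t | None => t v end).

(* s^F_{X=x}: the recursive computation along the (acyclic) parent graph,
   realised as #|V| rounds of recomputation starting from s with X set to x. *)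
Definition interv (F : Sys) (I : intv) (s : Asg) : Asg :=
  iter #|V| (step (sys_int F I)) (setv I s).

Inductive form : Type :=
  | FEq  (X : V) (x : Ran X)
  | FDep (X : V)
  | FNeg (a : form)
  | FAnd (a b : form)
  | FOr  (a b : form)
  | FCf  (I : intv) (a : form).

Fixpoint satc (F : Sys) (S : {set Asg}) (phi : form) : Prop :=
  match phi with
  | FEq X x => forall s, s \in S -> s X = x
  | FDep X => forall s t, s \in S -> t \in S -> s X = t X
  | FNeg a => forall s, s \in S -> ~ satc F [set s] a
  | FAnd a b => satc F S a /\ satc F S b
  | FOr a b => exists S1 S2 : {set Asg},
      [/\ S1 \subset S, S2 \subset S, S1 :|: S2 = S, satc F S1 a & satc F S2 b]
  | FCf J a => consistent J -> satc (sys_int F J) [set interv F J s | s in S] a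
  end.

Definition gint (I : intv) (p : Asg * Sys) : Asg * Sys :=
  (interv p.2 I p.1, sys_int p.2 I).

Fixpoint satg (T : {set Asg * Sys}) (phi : form) : Prop :=
  match phi with
  | FEq X x => forall p, p \in T -> p.1 X = x
  | FDep X => forall p q, p \in T -> q \in T -> p.1 X = q.1 X
  | FNeg a => forall p, p \in T -> ~ satg [set p] a
  | FAnd a b => satg T a /\ satg T b
  | FOr a b => exists T1 T2 : {set Asg * Sys},
      [/\ T = T1 :|: T2, satg T1 a & satg T2 b]
  | FCf J a => consistent J -> satg [set gint J p | p in T] a
  end.

Definition causal_team (F : Sys) (S : {set Asg}) : Prop :=
  valid_sys F /\ (forall s, s \in S -> compatible F s).

Definition gen_team (T : {set Asg * Sys}) : Prop :=
  forall p, p \in T -> valid_sys p.2 /\ compatible p.2 p.1.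

Definition fconst v (f : {ffun Asg -> Ran v}) : bool := [forall s, [forall t, f s == f t]].

Definition nonconst_en (F : Sys) : {set V} :=
  [set v | match Fn F v with Some f => ~~ fconst f | None => false end].

(* F_v ~ G_v: F_v(x y) = G_v(x z) for all values x of the common parents,
   y of PA^F_v \ PA^G_v, z of PA^G_v \ PA^F_v *)
Definition fsim (F G : Sys) v (f g : {ffun Asg -> Ran v}) : bool :=
  [forall s : Asg, [forall t : Asg,
     [forall w in PA F v :&: PA G v, s w == t w] ==> (f s == g t)]].

Definition sys_sim (F G : Sys) : bool :=
  (nonconst_en F == nonconst_en G) &&
  [forall v in nonconst_en F,
     match Fn F v, Fn G v with Some f, Some g => fsim F G f g | _, _ => false end].

Definition approx (p q : Asg * Sys) : bool := (p.1 == q.1) && sys_sim p.2 q.2.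

Definition quot (T : {set Asg * Sys}) : {set {set Asg * Sys}} :=
  [set [set q in T | approx p q] | p in T].

(* chi.  v0 is some variable (Dom nonempty); the conjunction is written as a
   right-nested fold ending with =(v0). *)
Definition Wlist (v : V) (s : Asg) : intv :=
  [seq Tagged Ran (s u) | u <- enum V & u != v].

Definition chi_cfs : seq form :=
  flatten [seq [seq FCf w (FDep v) | w <- undup [seq Wlist v s | s <- enum Asg]]
          | v <- enum V].

Definition chi (v0 : V) : form :=
  foldr FAnd (FDep v0) (chi_cfs ++ [seq FDep v | v <- enum V & v != v0]).

Definition fbot (v0 : V) (x0 : Ran v0) : form := FAnd (FEq x0) (FNeg (FEq x0)).

Fixpoint chik (v0 : V) (x0 : Ran v0) (k : nat) : form :=
  match k with
  | 0 => fbot x0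
  | 1 => chi v0
  | k'.+1 => FOr (chik x0 k') (chi v0)
  end.

End CausalTeams.

(* Main.v *)
Require Import Defs.
From mathcomp Require Import ssreflect ssrfun ssrbool eqtype ssrnat seq choice fintype finfun finset fingraph.
From Corelib Require Import Setoid.
Set Implicit Arguments. Unset Strict Implicit. Unset Printing Implicit Defensive.

Section Quot.
Variable X : finType.
Variable R : rel X.
Variable D : X -> Prop.
Hypothesis Rrefl : forall x, D x -> R x x.
Hypothesis Rsym : forall x y, D x -> D y -> R x y -> R y x.
Hypothesis Rtrans : forall x y z, D x -> D y -> D z -> R x y -> R y z -> R x z.

Definition cls (T : {set X}) p := [set q in T | R p q].
Definition qt (T : {set X}) := [set cls T p | p in T].
Definition AllR (T : {set X}) := forall p q, p \in T -> q \in T -> R p q.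
Definition inD (T : {set X}) := forall p, p \in T -> D p.

Lemma qt0 T : #|qt T| <= 0 <-> T = set0.
Proof.
rewrite leqn0 cards_eq0 imset_eq0; split; first by move/eqP.
by move=> ->.
Qed.

Lemma qt1 T : inD T -> (AllR T <-> #|qt T| <= 1).
Proof.
move=> HD; split.
  move=> HA; apply/card_le1_eqP => x y /imsetP [p pT ->] /imsetP [q qT ->].
  apply/setP => r; rewrite !inE; case rT: (r \in T) => //=.
  by rewrite !HA.
move=> /card_le1_eqP H p q pT qT.
have e : cls T p = cls T q by apply: H; apply: imset_f.
have : q \in cls T q by rewrite inE qT Rrefl //; apply: HD.
by rewrite -e inE => /andP [].
Qed.

Lemma qt_sub (A U : {set X}) : inD U -> A \subset U -> #|[set cls U p | p in A]| <= #|qt A|.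
Proof.
move=> HD sAU.
pose h (C : {set X}) := if [pick x in C] is Some x then cls U x else set0.
have -> : [set cls U p | p in A] = [set h C | C in qt A].
  rewrite /qt -imset_comp; apply: eq_in_imset => p pA /=.
  rewrite /h; case: pickP => [x|].
    rewrite inE => /andP [xA Rpx].
    have pU : p \in U by apply: (subsetP sAU).
    have xU : x \in U by apply: (subsetP sAU).
    apply/setP => r; rewrite !inE; case rU: (r \in U) => //=.
    apply/idP/idP => H.
      exact: Rtrans (HD _ xU) (HD _ pU) (HD _ rU) (Rsym (HD _ pU) (HD _ xU) Rpx) H.
    exact: Rtrans (HD _ pU) (HD _ xU) (HD _ rU) Rpx H.
  move/(_ p); rewrite inE pA Rrefl //.
  by apply: HD; apply: (subsetP sAU).
exact: leq_imset_card.
Qed.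

Lemma qtU (A B : {set X}) : inD (A :|: B) -> #|qt (A :|: B)| <= #|qt A| + #|qt B|.
Proof.
move=> HD; rewrite /qt imsetU.
apply: leq_trans (leq_card_setU _ _) _.
apply: leq_add; apply: qt_sub => //; [exact: subsetUl | exact: subsetUr].
Qed.

Lemma qtsplit T n : inD T -> #|qt T| <= n.+1 ->
  exists T1 T2, [/\ T = T1 :|: T2, #|qt T1| <= n & AllR T2].
Proof.
move=> HD Hc.
case: (set_0Vmem T) => [->|[p pT]].
  exists set0, set0; split; first by rewrite setU0.
    by rewrite /qt imset0 cards0.
  by move=> x y; rewrite inE.
pose C := cls T p.
have CT : C \subset T by apply/subsetP => x; rewrite inE => /andP [].
exists (T :\: C), C; split.
- apply/setP => x; rewrite !inE; by case: (x \in T); case: (R p x).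
- have sub : qt (T :\: C) \subset qt T :\ C.
    apply/subsetP => X0 /imsetP [q]; rewrite inE => /andP [qC qT] ->.
    have qD := HD _ qT.
    have key : forall r, r \in T -> R q r -> ~~ R p r.
      move=> r rT Rqr; apply/negP => Rpr; move/negP: qC; apply.
      rewrite /C /cls inE qT /=.
      exact: Rtrans (HD _ pT) (HD _ rT) qD Rpr (Rsym qD (HD _ rT) Rqr).
    have e : cls (T :\: C) q = cls T q.
      apply/setP => r; rewrite /C /cls !inE; case rT: (r \in T); rewrite /= ?andbF //.
      case Rqr: (R q r); rewrite ?andbF ?andbT //.
      by rewrite (key r rT Rqr).
    rewrite e !inE imset_f // andbT.
    apply/negP => /eqP eC; move/negP: qC; apply.
    by rewrite -eC inE qT Rrefl.
  apply: leq_trans (subset_leq_card sub) _.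
  move: Hc; rewrite (cardsD1 C) imset_f //.
- move=> x y; rewrite !inE => /andP [xT Rpx] /andP [yT Rpy].
  exact: Rtrans (HD _ xT) (HD _ pT) (HD _ yT) (Rsym (HD _ pT) (HD _ xT) Rpx) Rpy.
Qed.

Lemma qt_main (sat : nat -> {set X} -> Prop)
  (H1 : forall T, inD T -> (sat 0 T <-> AllR T))
  (HS : forall n T, sat n.+1 T <-> exists T1 T2, [/\ T = T1 :|: T2, sat n T1 & sat 0 T2]) :
  forall n T, inD T -> (sat n T <-> #|qt T| <= n.+1).
Proof.
elim=> [|n IH] T HD.
  by split => [/(H1 _ HD)/(qt1 HD)|/(qt1 HD)/(H1 _ HD)].
have sub1 A B : inD (A :|: B) -> inD A by move=> H x xA; apply: H; rewrite inE xA.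
have sub2 A B : inD (A :|: B) -> inD B by move=> H x xA; apply: H; rewrite inE xA orbT.
split.
  move/HS=> [T1 [T2 [eT s1 s2]]]; rewrite eT in HD *.
  apply: leq_trans (qtU HD) _.
  rewrite -addn1; apply: leq_add.
    by apply/(IH _ (sub1 _ _ HD)).
  by apply/(qt1 (sub2 _ _ HD))/(H1 _ (sub2 _ _ HD)).
move=> Hc; have [T1 [T2 [eT c1 a2]]] := qtsplit HD Hc.
rewrite eT in HD; apply/HS; exists T1, T2; split => //.
  by apply/(IH _ (sub1 _ _ HD)).
by apply/(H1 _ (sub2 _ _ HD)).
Qed.
End Quot.
Fixpoint inL {A : Type} (x : A) (l : seq A) : Prop :=
  match l with [::] => False | y :: l => y = x \/ inL x l end.

Lemma inl_cat A (x : A) l1 l2 : inL x (l1 ++ l2) <-> inL x l1 \/ inL x l2.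
Proof.
elim: l1 => [|y l IH] /=; first by split => [|[]//]; right.
split => [[->|/IH[]]|[[->|H]|H]]; auto; right; apply/IH; auto.
Qed.

Lemma inl_map A B (f : A -> B) y l : inL y (map f l) <-> exists x, inL x l /\ y = f x.
Proof.
elim: l => [|x l IH] /=; first by split => // [[x []]].
split.
  case=> [E|H]; first by exists x; auto.
  by case/IH: H => z [zl ->]; exists z; auto.
case=> z [[E|zl] ey]; first by left; rewrite ey E.
by right; apply/IH; exists z.
Qed.

Lemma inl_flatten A (x : A) ss : inL x (flatten ss) <-> exists l, inL l ss /\ inL x l.
Proof.
elim: ss => [|s ss IH] /=; first by split => // [[l []]].
split.
  case/inl_cat=> [H|H]; first by exists s; auto.
  by case/IH: H => l [H1 H2]; exists l; auto.
case=> l [[E|H1] H2]; apply/inl_cat; first by left; rewrite E.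
by right; apply/IH; exists l.
Qed.

Lemma inl_mem (T : eqType) (x : T) l : inL x l <-> x \in l.
Proof.
elim: l => [|y l IH] //=; rewrite in_cons; split.
  by case=> [->|/IH ->]; rewrite ?eqxx ?orbT.
by case/orP => [/eqP ->|/IH]; auto.
Qed.

Section Sem.
Variable V : finType.
Variable Ran : V -> finType.
Variable v0 : V.

Local Notation Asg := (Asg Ran).
Local Notation Sys := (Sys Ran).
Local Notation form := (form Ran).

Lemma foldr_sem (P : form -> Prop) (HP : forall a b, P (FAnd a b) <-> P a /\ P b) a l :
  P (foldr (@FAnd V Ran) a l) <-> (forall b, inL b (a :: l) -> P b).
Proof.
elim: l => [|c l IH] /=.
  by split => [H b [<-|[]]|H]; [|apply: H; left].
split.
  move/HP=> [Pc /IH H] b [<-|[<-|bl]]; [apply: H; left|done|apply: H; right] => //.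
move=> H; apply/HP; split; first by apply: H; right; left.
by apply/IH => b [<-|bl]; apply: H; [left|right; right].
Qed.

Definition chil := FDep Ran v0 :: chi_cfs Ran ++ [seq FDep Ran v | v <- enum V & v != v0].

Lemma chi_dep v : inL (FDep Ran v) chil.
Proof.
case: (eqVneq v v0) => [->|ne]; first by left.
right; apply/inl_cat; right; apply/inl_map; exists v; split => //.
by apply/inl_mem; rewrite mem_filter ne mem_enum.
Qed.

Lemma chi_cf v s : inL (FCf (Wlist v s) (FDep Ran v)) chil.
Proof.
right; apply/inl_cat; left; apply/inl_flatten.
exists [seq FCf w (FDep Ran v) | w <- undup [seq Wlist v s | s <- enum Asg]]; split.
  by apply/inl_map; exists v; split => //; apply/inl_mem; rewrite mem_enum.
apply/inl_map; exists (Wlist v s); split => //.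
by apply/inl_mem; rewrite mem_undup; apply: map_f; rewrite mem_enum.
Qed.

Lemma chi_mem b : inL b chil ->
  (exists v, b = FDep Ran v) \/ (exists v s, b = FCf (Wlist v s) (FDep Ran v)).
Proof.
case=> [<-|/inl_cat [/inl_flatten [l [/inl_map [v [_ ->]] /inl_map [w [wl ->]]]]|/inl_map [v [_ ->]]]].
- by left; exists v0.
- move/inl_mem: wl; rewrite mem_undup => /mapP [s _ ->].
  by right; exists v, s.
- by left; exists v.
Qed.

Lemma consistent_W v (s : Asg) : consistent (Wlist v s).
Proof.
move=> i j /mapP [x _ ->] /mapP [y _ ->] /= exy.
by subst.
Qed.

Lemma setv_W v (s r : Asg) u : setv (Wlist v s) r u = if u == v then r u else s u.
Proof.
rewrite /setv ffunE /Wlist.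
have -> : (u == v) = (u \notin [seq x <- enum V | x != v]) by rewrite mem_filter mem_enum andbT negbK.
elim: [seq x <- enum V | x != v] => [|x l IH] //=.
rewrite in_cons; case: eqP => [<-|ne] /=.
  by rewrite eqxx /= tagged_asE.
by rewrite IH; case: eqP => // e; case: ne.
Qed.

Lemma ivars_W v (s : Asg) u : (u \in ivars (Wlist v s)) = (u != v).
Proof.
rewrite /ivars inE /Wlist has_map.
apply/hasP/idP => [[x xin /eqP <-]|H].
  by move: xin; rewrite mem_filter => /andP [].
by exists u; [rewrite mem_filter H mem_enum | rewrite /= eqxx].
Qed.

Lemma Fn_int (F : Sys) I u : Fn (sys_int F I) u = if u \in ivars I then None else Fn F u.
Proof. by rewrite /Fn /sys_int /= ffunE. Qed.

Lemma stepE (G : Sys) t u : step G t u = match Fn G u with Some f => f t | None => t u end.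
Proof. by rewrite /step ffunE. Qed.

Lemma interv_W (F : Sys) v (s r : Asg) : valid_sys F ->
  interv F (Wlist v s) r v = match Fn F v with Some f => f s | None => r v end.
Proof.
case=> Hirr _ Hdep _.
rewrite /interv.
set G := sys_int F (Wlist v s).
set r' := setv (Wlist v s) r.
have off : forall m u, u != v -> iter m (step G) r' u = r' u.
  elim=> [|m IH] u uv //=.
  by rewrite stepE /G Fn_int ivars_W uv IH.
have GvE : Fn G v = Fn F v by rewrite /G Fn_int ivars_W eqxx.
have [n cn] : exists n, #|V| = n.+1.
  have : 0 < #|V| by apply/card_gt0P; exists v.
  by case: #|V| => // n _; exists n.
rewrite cn; case E: (Fn F v) => [f|].
  rewrite iterS stepE GvE E.
  have -> : f (iter n (step G) r') = f r'.
    apply: Hdep E _ _ _ => w wP; apply: off.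
    by apply/eqP => ewv; move: (Hirr v); rewrite -{1}ewv wP.
  apply: Hdep E _ _ _ => w wP; rewrite /r' setv_W.
  by case: eqP => // ewv; move: (Hirr v); rewrite -{1}ewv wP.
have : forall m, iter m (step G) r' v = r' v.
  by elim=> [|m IH] //=; rewrite stepE GvE E IH.
by move=> ->; rewrite /r' setv_W eqxx.
Qed.


Definition gval (p : Asg * Sys) v (s : Asg) : Ran v :=
  match Fn p.2 v with Some f => f s | None => p.1 v end.

Definition Dg (p : Asg * Sys) : Prop := valid_sys p.2 /\ compatible p.2 p.1.

Lemma gval_nc p v s : Dg p -> v \notin nonconst_en p.2 -> gval p v s = p.1 v.
Proof.
case=> _ Hc; rewrite /gval inE; case E: (Fn p.2 v) => [f|] //.
rewrite negbK => /forallP /(_ s) /forallP /(_ p.1) /eqP ->.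
by have := Hc v; rewrite E => ->.
Qed.

Lemma nc_some (F : Sys) v : v \in nonconst_en F -> exists2 f, Fn F v = Some f & ~~ fconst f.
Proof. by rewrite inE; case: (Fn F v) => // f H; exists f. Qed.

Lemma nc_transfer p q v : Dg p -> Dg q -> p.1 = q.1 ->
  (forall v s, gval p v s = gval q v s) ->
  v \in nonconst_en p.2 -> v \in nonconst_en q.2.
Proof.
move=> Dp Dq e H vN; case vN': (v \in nonconst_en q.2) => //; move/negbT: vN' => vN'.
have [f Ef nf] := nc_some vN; suff : fconst f by rewrite (negbTE nf).
apply/forallP => s; apply/forallP => t; apply/eqP.
have := H v s; have := H v t.
rewrite !(gval_nc _ Dq vN') /gval Ef.
by move=> -> ->.
Qed.

Lemma approxE p q : Dg p -> Dg q ->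
  (approx p q <-> (p.1 = q.1 /\ forall v s, gval p v s = gval q v s)).
Proof.
move=> Dp Dq; split.
  case/andP => /eqP e /andP [/eqP encE /forallP Hf]; split => // v s.
  case vN: (v \in nonconst_en p.2).
    have vN' : v \in nonconst_en q.2 by rewrite -encE.
    have [f Ef _] := nc_some vN; have [g Eg _] := nc_some vN'.
    move: (Hf v); rewrite vN /= Ef Eg => /forallP /(_ s) /forallP /(_ s) /implyP H.
    rewrite /gval Ef Eg; apply/eqP; apply: H.
    by apply/forall_inP => w _.
  have vN' : v \notin nonconst_en q.2 by rewrite -encE vN.
  by rewrite (gval_nc s Dp (negbT vN)) (gval_nc s Dq vN') e.
move=> [e H]; apply/andP; split; first by apply/eqP.
have H' : forall v s, gval q v s = gval p v s by move=> v s; rewrite H.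
apply/andP; split.
  apply/eqP/setP => v; apply/idP/idP; first exact: nc_transfer.
  exact: nc_transfer.
apply/forallP => v; apply/implyP => vN.
have vN' := nc_transfer Dp Dq e H vN.
have [f Ef _] := nc_some vN; have [g Eg _] := nc_some vN'.
rewrite Ef Eg.
apply/forallP => s; apply/forallP => t; apply/implyP => /forall_inP Hst.
pose u := (finfun (fun w : V => if w \in PA p.2 v then s w else t w) : Asg).
case: Dp => [[_ _ HdepF _] _]; case: Dq => [[_ _ HdepG _] _].
have e1 : f s = f u.
  apply: HdepF Ef _ _ _ => w wP; by rewrite /u ffunE wP.
have e2 : g u = g t.
  apply: HdepG Eg _ _ _ => w wP; rewrite /u ffunE.
  case wF: (w \in PA p.2 v) => //.
  by apply/eqP; apply: Hst; rewrite inE wF.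
have e3 : f u = g u by move: (H v u); rewrite /gval Ef Eg.
by rewrite e1 e3 e2.
Qed.

Lemma gint_W p v s : Dg p -> (gint (Wlist v s) p).1 v = gval p v s.
Proof. by case=> Hv _; rewrite /gint /= interv_W. Qed.

Lemma satg_chi (T : {set Asg * Sys}) : (forall p, p \in T -> Dg p) ->
  (satg T (chi Ran v0) <-> AllR (@approx V Ran) T).
Proof.
move=> HD.
have HP : forall a b, satg T (FAnd a b) <-> satg T a /\ satg T b by [].
have := foldr_sem HP (FDep Ran v0) (chi_cfs Ran ++ [seq FDep Ran v | v <- enum V & v != v0]).
rewrite /chi => ->; split.
  move=> H p q pT qT; apply/(approxE (HD _ pT) (HD _ qT)); split.
    by apply/ffunP => v; apply: (H _ (chi_dep v)).
  move=> v s.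
  have := H _ (chi_cf v s) (consistent_W (v:=v) (s:=s)) (gint (Wlist v s) p) (gint (Wlist v s) q).
  move=> /(_ (imset_f _ pT) (imset_f _ qT)).
  by rewrite (gint_W v s (HD _ pT)) (gint_W v s (HD _ qT)).
move=> H b /chi_mem [[v ->]|[v [s ->]]] /=.
  move=> p q pT qT.
  by case: (approxE (HD _ pT) (HD _ qT)) => /(_ (H p q pT qT)) [-> _].
move=> _ x y /imsetP [p pT ->] /imsetP [q qT ->].
rewrite (gint_W v s (HD _ pT)) (gint_W v s (HD _ qT)).
by case: (approxE (HD _ pT) (HD _ qT)) => /(_ (H p q pT qT)) [_ ->].
Qed.

Lemma satc_chi (F : Sys) (S : {set Asg}) :
  (satc F S (chi Ran v0) <-> forall s t, s \in S -> t \in S -> s = t).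
Proof.
have HP : forall a b, satc F S (FAnd a b) <-> satc F S a /\ satc F S b by [].
have := foldr_sem HP (FDep Ran v0) (chi_cfs Ran ++ [seq FDep Ran v | v <- enum V & v != v0]).
rewrite /chi => ->; split.
  move=> H s t sS tS; apply/ffunP => v; exact: (H _ (chi_dep v)).
move=> H b /chi_mem [[v ->]|[v [s ->]]] /=.
  by move=> x y xS yS; rewrite (H x y).
move=> _ x y /imsetP [a aS ->] /imsetP [c cS ->].
by rewrite (H a c).
Qed.

End Sem.
Unset Implicit Arguments.
Theorem proposition5p4 (V : finType) (Ran : V -> finType)
    (HRan : forall v : V, 0 < #|Ran v|) (v0 : V) (x0 : Ran v0) (k : nat) :
  (forall T : {set Asg Ran * Sys Ran},
      gen_team T -> (satg T (chik x0 k) <-> #|quot T| <= k)) /\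
  (forall (F : Sys Ran) (S : {set Asg Ran}),
      causal_team F S -> (satc F S (chik x0 k) <-> #|S| <= k)).
Proof.
have Rrefl : forall p : Asg Ran * Sys Ran, Dg p -> approx p p.
  by move=> p Dp; apply/(approxE Dp Dp).
have Rsym : forall p q : Asg Ran * Sys Ran, Dg p -> Dg q -> approx p q -> approx q p.
  move=> p q Dp Dq /(approxE Dp Dq) [e H]; apply/(approxE Dq Dp); split.
    by rewrite e.
  by move=> v s; rewrite H.
have Rtrans : forall p q r : Asg Ran * Sys Ran, Dg p -> Dg q -> Dg r ->
    approx p q -> approx q r -> approx p r.
  move=> p q r Dp Dq Dr /(approxE Dp Dq) [e1 H1] /(approxE Dq Dr) [e2 H2].
  apply/(approxE Dp Dr); split; first by rewrite e1.
  by move=> v s; rewrite H1.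
split.
- move=> T HT.
  have HD : forall p, p \in T -> Dg p := HT.
  case: k => [|n].
    change (#|quot T| <= 0) with (#|qt (@approx V Ran) T| <= 0).
    rewrite qt0 /=; split.
      case=> H1 H2; apply/setP => p; rewrite inE; apply/negbTE/negP => pT.
      by apply: (H2 p pT) => q; rewrite inE => /eqP ->; apply: H1.
    by move=> ->; split => p; rewrite inE.
  change (#|quot T| <= n.+1) with (#|qt (@approx V Ran) T| <= n.+1).
  apply: (qt_main (R := @approx V Ran) (D := @Dg V Ran) Rrefl Rsym Rtrans
            (sat := fun n T => satg T (chik x0 n.+1))) => //.
    by move=> U HU; apply: satg_chi.
- move=> F S [HF HS].
  case: k => [|n].
    rewrite leqn0 cards_eq0 /=; split.
      case=> H1 H2; apply/eqP/setP => s; rewrite inE; apply/negbTE/negP => sS.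
      by apply: (H2 s sS) => t; rewrite inE => /eqP ->; apply: H1.
    by move/eqP=> ->; split => s; rewrite inE.
  have -> : #|S| = #|qt eq_op S|.
    rewrite /qt (@eq_in_imset _ _ _ set1) ?card_imset //; first exact: set1_inj.
    move=> s sS; apply/setP => t; rewrite !inE.
    by rewrite eq_sym; case: eqP => [->|]; rewrite ?sS ?andbF.
  have Erefl : forall x : Asg Ran, True -> x == x by move=> x _; exact: eqxx.
  have Esym : forall x y : Asg Ran, True -> True -> x == y -> y == x.
    by move=> x y _ _ /eqP ->.
  have Etrans : forall x y z : Asg Ran, True -> True -> True -> x == y -> y == z -> x == z.
    by move=> x y z _ _ _ /eqP -> /eqP ->.
  apply: (qt_main (R := eq_op) (D := fun _ => True) Erefl Esym Etrans
            (sat := fun n U => satc F U (chik x0 n.+1))).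
  + move=> U _; rewrite /= satc_chi; split => H p q pU qU.
      by apply/eqP; apply: H.
    by apply/eqP; apply: H.
  + move=> m U; split.
      by case=> [S1 [S2 [_ _ e s1 s2]]]; exists S1, S2; split.
    case=> [S1 [S2 [e s1 s2]]]; exists S1, S2; split => //; rewrite e.
      exact: subsetUl.
    exact: subsetUr.
  + by [].
Qed.
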